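(* Let $K$ be a perfect field, $k\subset K$ a subfield, $\lambda\in\operatorname{Emb}(K)$ with $|\lambda^G|=n<\infty$, and let $K^n_\phi$ be the simple two-sided vector space corresponding to $\lambda$. Let $\phi^T:K\to M_n(K)$ be $x\mapsto\phi(x)^T$. Then $K^n_{\phi^T}\cong K^n_\phi$ as two-sided vector spaces.
   Context: Let $\overline{K}$ be a fixed algebraic closure of $K$. A two-sided vector space is a $K\otimes_k K$-module. $\operatorname{Emb}(K)$ is the set of $k$-linear field embeddings $K\to\overline{K}$; $G=\operatorname{Aut}(\overline{K}/K)$ acts by left composition, with orbits $\lambda^G$. $K(\lambda)$ is the composite of $K$ and $\lambda(K)$ in $\overline{K}$. For a homomorphism $\phi:K\to M_n(K)$, $K^n_\phi$ denotes the row vectors $K^n$ with left action by scalar multiplication and right action $v\cdot x=v\phi(x)$. The simple two-sided vector space corresponding to $\lambda$ is $K^n_\phi$ with $\phi$ defined as follows: $\alpha_1,\dots,\alpha_n$ is a basis of $K(\lambda)$ over $K$, $\lambda_i:K\to K$ are defined by $\lambda(x)=\sum_i\lambda_i(x)\alpha_i$, $\beta_{ijk}\in K$ by $\alpha_i\alpha_j=\sum_k\beta_{ijk}\alpha_k$, and $\phi_{ij}(x)=\sum_k\beta_{jki}\lambda_k(x)$. *)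

(* Defs.v *)
From HB Require Import structures.
From mathcomp Require Import all_boot all_order all_algebra.
Set Implicit Arguments. Unset Strict Implicit. Unset Printing Implicit Defensive.
Import Order.TTheory GRing.Theory Num.Theory.
Local Open Scope ring_scope.

Definition perfect_field (K : fieldType) : Prop :=
  forall p : nat, p \in [pchar K] -> forall x : K, exists y : K, y ^+ p = x.

Definition is_alg_closure (K : fieldType) (Kbar : closedFieldType)
  (iota : {rmorphism K -> Kbar}) : Prop :=
  forall z : Kbar, exists p : {poly K}, p != 0 /\ root (map_poly iota p) z.

Definition is_emb (K : fieldType) (Kbar : closedFieldType)
  (iota : {rmorphism K -> Kbar}) (k : {pred K}) (lam : K -> Kbar) : Prop :=
  (exists f : {rmorphism K -> Kbar}, f =1 lam) /\
  (forall c x, c \in k -> lam (c * x) = iota c * lam x).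

Definition in_Galois (K : fieldType) (Kbar : closedFieldType)
  (iota : {rmorphism K -> Kbar}) (s : Kbar -> Kbar) : Prop :=
  (exists f : {rmorphism Kbar -> Kbar}, f =1 s) /\ bijective s /\
  (forall x : K, s (iota x) = iota x).

Definition in_orbit (K : fieldType) (Kbar : closedFieldType)
  (iota : {rmorphism K -> Kbar}) (lam mu : K -> Kbar) : Prop :=
  exists s : Kbar -> Kbar, in_Galois iota s /\ mu =1 s \o lam.

(* |lam^G| = n (functions identified up to extensional equality) *)
Definition orbit_card (K : fieldType) (Kbar : closedFieldType)
  (iota : {rmorphism K -> Kbar}) (lam : K -> Kbar) (n : nat) : Prop :=
  exists e : 'I_n -> (K -> Kbar),
    (forall i, in_orbit iota lam (e i)) /\
    (forall i j, e i =1 e j -> i = j) /\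
    (forall mu, in_orbit iota lam mu -> exists i, mu =1 e i).

(* z lies in the composite K(lam) of iota(K) and lam(K) inside Kbar:
   the smallest subfield of Kbar containing both. *)
Definition in_composite (K : fieldType) (Kbar : closedFieldType)
  (iota : {rmorphism K -> Kbar}) (lam : K -> Kbar) (z : Kbar) : Prop :=
  forall S : {pred Kbar}, divring_closed S ->
    (forall y, iota y \in S) -> (forall y, lam y \in S) -> z \in S.

Definition is_basis_composite (K : fieldType) (Kbar : closedFieldType)
  (iota : {rmorphism K -> Kbar}) (lam : K -> Kbar) (n : nat)
  (alpha : 'I_n -> Kbar) : Prop :=
  (forall i, in_composite iota lam (alpha i)) /\
  (forall c : 'I_n -> K, \sum_i iota (c i) * alpha i = 0 -> forall i, c i = 0) /\
  (forall z, in_composite iota lam z ->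
     exists c : 'I_n -> K, z = \sum_i iota (c i) * alpha i).

Definition phi_mx (K : fieldType) (n : nat) (beta : 'I_n -> 'I_n -> 'I_n -> K)
  (lamc : 'I_n -> K -> K) (x : K) : 'M[K]_n :=
  \matrix_(i < n, j < n) \sum_(k < n) beta j k i * lamc k x.

(* Isomorphism of two-sided vector spaces K^n_A ~= K^n_B: a bijective
   additive map of row vectors commuting with the left scalar action and the
   right actions v . x = v *m A x, resp. v *m B x. *)
Definition twosided_iso (K : fieldType) (n : nat) (A B : K -> 'M[K]_n) : Prop :=
  exists f : 'rV[K]_n -> 'rV[K]_n,
    bijective f /\
    (forall u v, f (u + v) = f u + f v) /\
    (forall (a : K) v, f (a *: v) = a *: f v) /\
    (forall x v, f (v *m A x) = f v *m B x).

(* Main.v *)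
Require Import Defs.
From HB Require Import structures.
From mathcomp Require Import all_boot all_order all_algebra.
Import GRing.Theory.
Local Open Scope ring_scope.

Section Aux.
Variable (F : fieldType) (S : {pred F}).
Hypothesis hS : divring_closed S.

Lemma dc1 : 1 \in S. Proof. by case: hS. Qed.
Lemma dcB u v : u \in S -> v \in S -> u - v \in S.
Proof. by case: hS => _ h _; apply: h. Qed.
Lemma dcDiv u v : u \in S -> v \in S -> u / v \in S.
Proof. by case: hS => _ _ h; apply: h. Qed.
Lemma dc0 : 0 \in S. Proof. by rewrite -(subrr 1) dcB ?dc1. Qed.
Lemma dcN u : u \in S -> - u \in S. Proof. by move=> h; rewrite -sub0r dcB ?dc0. Qed.
Lemma dcD u v : u \in S -> v \in S -> u + v \in S.
Proof. by move=> hu hv; rewrite -(opprK v) dcB ?dcN. Qed.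
Lemma dcV u : u \in S -> u^-1 \in S. Proof. by move=> h; rewrite -div1r dcDiv ?dc1. Qed.
Lemma dcM u v : u \in S -> v \in S -> u * v \in S.
Proof. by move=> hu hv; rewrite -(invrK v) dcDiv ?dcV. Qed.
Lemma dcSum n (f : 'I_n -> F) : (forall i, f i \in S) -> \sum_i f i \in S.
Proof. move=> h; apply: (big_ind (fun x => x \in S)); [exact: dc0|exact: dcD|by []]. Qed.
End Aux.

Lemma lincomb (K : fieldType) (L : fieldType) (iota : {rmorphism K -> L}) n
  (alpha : 'I_n -> L) (c : 'I_n -> K) (e : 'I_n -> 'I_n -> K) :
  \sum_i iota (c i) * (\sum_m iota (e i m) * alpha m) =
  \sum_m iota (\sum_i c i * e i m) * alpha m.
Proof.
under eq_bigr => i _ do rewrite mulr_sumr.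
rewrite exchange_big /=; apply: eq_bigr => m _.
rewrite rmorph_sum mulr_suml; apply: eq_bigr => i _.
by rewrite rmorphM mulrA.
Qed.

Theorem lemma2p2 (K : fieldType) (k : {pred K}) (Kbar : closedFieldType)
  (iota : {rmorphism K -> Kbar}) (lam : K -> Kbar) (n : nat)
  (alpha : 'I_n -> Kbar) (lamc : 'I_n -> K -> K)
  (beta : 'I_n -> 'I_n -> 'I_n -> K) :
  perfect_field K ->
  divring_closed k ->
  is_alg_closure iota ->
  is_emb iota k lam ->
  orbit_card iota lam n ->
  is_basis_composite iota lam alpha ->
  (forall x : K, lam x = \sum_i iota (lamc i x) * alpha i) ->
  (forall i j, alpha i * alpha j = \sum_k iota (beta i j k) * alpha k) ->
  twosided_iso (phi_mx beta lamc) (fun x => (phi_mx beta lamc x)^T).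
Proof.
move=> _ _ _ _ _ [Hin [Hind Hspan]] Hlam Hbeta.
have uniq : forall c d : 'I_n -> K, \sum_i iota (c i) * alpha i = \sum_i iota (d i) * alpha i ->
    forall i, c i = d i.
  move=> c d e i; apply/eqP; rewrite -subr_eq0; apply/eqP.
  apply: (Hind (fun i => c i - d i)) => //.
  under eq_bigr => j _ do rewrite rmorphB mulrBl.
  by rewrite sumrB e subrr.
have key : forall i (c : 'I_n -> K), alpha i * \sum_l iota (c l) * alpha l =
    \sum_m iota (\sum_l c l * beta i l m) * alpha m.
  move=> i c; rewrite -lincomb mulr_sumr; apply: eq_bigr => l _.
  by rewrite mulrCA Hbeta.
case: n alpha lamc beta Hin Hind Hspan Hlam Hbeta uniq key
  => [|n] alpha lamc beta Hin Hind Hspan Hlam Hbeta uniq key.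
  exists id; split; first by exists id.
  do 2!split=> //; by move=> x v; rewrite !thinmx0.
pose B := \matrix_(i < n.+1, l < n.+1) beta i l ord0.
have Bsym : B^T = B.
  apply/matrixP => i l; rewrite !mxE.
  have e : \sum_m iota (beta l i m) * alpha m = \sum_m iota (beta i l m) * alpha m.
    by rewrite -!Hbeta mulrC.
  exact: uniq e ord0.
have bs : forall a b, beta a b ord0 = beta b a ord0.
  move=> a b; have := congr1 (fun M : 'M[K]_n.+1 => M a b) Bsym.
  by rewrite !mxE.
have comm : forall x, B *m phi_mx beta lamc x = (phi_mx beta lamc x)^T *m B.
  move=> x.
  have aj : forall j, alpha j * lam x = \sum_l iota (phi_mx beta lamc x l j) * alpha l.
    move=> j; rewrite Hlam key; apply: eq_bigr => l _; rewrite mxE.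
    by congr (iota _ * _); apply: eq_bigr => m _; rewrite mulrC.
  have sy : forall i j, alpha i * (alpha j * lam x) = alpha j * (alpha i * lam x).
    by move=> i j; rewrite mulrCA.
  apply/matrixP => i j; rewrite !mxE.
  have := sy i j; rewrite !aj !key => /uniq /(_ ord0) e.
  transitivity (\sum_l phi_mx beta lamc x l j * beta i l ord0).
    by apply: eq_bigr => l _; rewrite mxE mulrC.
  rewrite e; apply: eq_bigr => l _; rewrite !mxE.
  by rewrite bs.
have Bu : B \in unitmx.
  rewrite unitmxE unitfE; apply/det0P => -[v vn0 vB].
  pose c := fun i => v ord0 i.
  pose a := \sum_i iota (c i) * alpha i.
  have an0 : a != 0.
    apply/eqP => a0; move/eqP: vn0; apply; apply/rowP => i; rewrite mxE.
    exact: (Hind c a0).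
  have : in_composite iota lam (a^-1 * alpha ord0).
    move=> S hS h1 h2; apply: dcM => //; last exact: Hin.
    apply: dcV => //; apply: dcSum => // i; apply: dcM => //; exact: Hin.
  move=> /Hspan [d de].
  have : a * (a^-1 * alpha ord0) = \sum_m iota ((m == ord0)%:R) * alpha m.
    rewrite mulVKf // (bigD1 ord0) //= rmorph1 mul1r big1 ?addr0 //.
    by move=> m /negPf ->; rewrite rmorph0 mul0r.
  rewrite de /a mulr_suml.
  under eq_bigr => i _ do rewrite -mulrA key.
  rewrite lincomb => /uniq /(_ ord0); rewrite eqxx.
  under eq_bigr => i _ do rewrite mulr_sumr.
  rewrite exchange_big /=.
  rewrite big1 => [/eqP|l _]; first by rewrite eq_sym oner_eq0.
  rewrite (eq_bigr (fun i => d l * (c i * beta i l ord0))) => [|i _]; last by rewrite mulrCA.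
  rewrite -mulr_sumr.
  have := congr1 (fun M : 'rV[K]_n.+1 => M ord0 l) vB; rewrite !mxE => h.
  rewrite [X in d l * X](_ : _ = 0) ?mulr0 //.
  by rewrite -[RHS]h; apply: eq_bigr => i _; rewrite /B mxE.
exists (fun v => v *m invmx B); split.
  by exists (fun v => v *m B) => v; rewrite ?mulmxKV ?mulmxK.
split; first by move=> u v; rewrite mulmxDl.
split; first by move=> a v; rewrite scalemxAl.
move=> x v; rewrite -!mulmxA; congr (v *m _).
apply: (canRL (mulKmx Bu)); rewrite !mulmxA comm -mulmxA mulmxV //.
by rewrite mulmx1.
Qed.
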